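(* Let $\mathcal{B}=(T,\bowtie)$ be a homogeneous block, let $(T_1,\dots,T_k)$ be a legal partition of $T$ (a partition into $k$ conflict-free sets), and let $\sigma$ be a permutation of $\{1,\dots,k\}$. Let $\mathcal S=\mathrm{LevelSchedule}(T_1,\dots,T_k)$ and $\mathcal S_\sigma=\mathrm{LevelSchedule}(T_{\sigma(1)},\dots,T_{\sigma(k)})$. Then $\mathrm{Lt}_{\mathbb 1}(\mathcal S)\le k$ and $\mathrm{Lt}_{\mathbb 1}(\mathcal S_\sigma)\le k$.
   Context: A block consists of a finite set $T$ of transactions with a symmetric irreflexive conflict relation $\bowtie$; homogeneous means all transactions have the same length, taken to be $1$. A set is conflict-free if no two elements conflict; a legal partition is an ordered sequence of pairwise disjoint conflict-free sets with union $T$. A schedule is $\mathcal S\subseteq T\times T$ with $(T,\mathcal S)$ acyclic; $\mathrm{Lt}_{\mathbb 1}(\mathcal S)$ is the maximum number of vertices on a directed path in $(T,\mathcal S)$. $\mathrm{LevelSchedule}(B_1,\dots,B_k)$: set $B_0=\emptyset$, $\mathcal S=\emptyset$; for $i=1,\dots,k$ and, for each $i$, for $j=i-1,\dots,0$ (decreasing): let $E=\{(u,v)\in B_j\times B_i: u\bowtie v\}$, let $P$ be the set of pairs $(x,y)$ with a directed path from $x$ to $y$ in the current $(T,\mathcal S)$, and set $\mathcal S\leftarrow\mathcal S\cup(E\setminus P)$; output $\mathcal S$. *)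

(* Defs.v *)
From mathcomp Require Import all_boot all_fingroup.
Set Implicit Arguments. Unset Strict Implicit. Unset Printing Implicit Defensive.

Section Block.
Variable T : finType.
Variable conf : rel T.

Definition sched_edge (S : {set T * T}) : rel T := fun x y => (x, y) \in S.

Definition reach (S : {set T * T}) (x y : T) : bool :=
  [exists z, sched_edge S x z && connect (sched_edge S) z y].

Definition conflict_free (A : {set T}) : bool :=
  [forall x in A, forall y in A, ~~ conf x y].

Definition legal_partition (k : nat) (P : 'I_k -> {set T}) : Prop :=
  (forall i, conflict_free (P i)) /\
  (forall i j, i != j -> [disjoint P i & P j]) /\
  (\bigcup_(i < k) P i = [set: T]).

Definition level_step (B : nat -> {set T}) (i : nat) (S : {set T * T}) (j : nat)
  : {set T * T} :=
  S :|: [set p | [&& p.1 \in B j, p.2 \in B i, conf p.1 p.2 & ~~ reach S p.1 p.2]].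

(* LevelSchedule(B_1,...,B_k), blocks given as a sequence [B_1; ...; B_k]; B_0 = ∅ *)
Definition LevelSchedule (Bs : seq {set T}) : {set T * T} :=
  let B := fun j => if j is j'.+1 then nth set0 Bs j' else set0 in
  foldl (fun S i => foldl (level_step B i) S (rev (iota 0 i)))
        set0 (iota 1 (size Bs)).

Definition is_dpath (S : {set T * T}) (s : seq T) : bool :=
  if s is x :: p then uniq s && path (sched_edge S) x p else false.

(* Lt_1(S): maximum number of vertices on a directed path (unit lengths) *)
Definition Lt1 (S : {set T * T}) : nat :=
  \max_(n < #|T|.+1 | [exists t : n.-tuple T, is_dpath S t]) n.

End Block.

(* Main.v *)
Require Import Defs.
From mathcomp Require Import all_boot all_fingroup.
Set Implicit Arguments. Unset Strict Implicit. Unset Printing Implicit Defensive.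

Section Gen.
Variable T : finType.
Variable conf : rel T.
Variable Bs : seq {set T}.

Definition Inv (S : {set T * T}) : Prop :=
  forall p, p \in S -> exists i j, [/\ j < i, i < size Bs,
    p.1 \in nth set0 Bs j & p.2 \in nth set0 Bs i].

Lemma foldl_inv (A : eqType) (f : {set T * T} -> A -> {set T * T}) (s : seq A) a :
  (forall acc x, x \in s -> Inv acc -> Inv (f acc x)) -> Inv a -> Inv (foldl f a s).
Proof.
elim: s a => [|y s IH] a Hf Ha //=.
apply: IH; first by move=> acc x xs; apply: Hf; rewrite inE xs orbT.
by apply: Hf; rewrite ?inE ?eqxx.
Qed.

Lemma LS_inv : Inv (LevelSchedule conf Bs).
Proof.
rewrite /LevelSchedule.
apply: foldl_inv; last by move=> p; rewrite inE.
move=> S i; rewrite mem_iota => /andP [i1 isz] HS.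
apply: foldl_inv => // acc j; rewrite mem_rev mem_iota /= => ji Hacc p.
rewrite /level_step inE => /orP [/Hacc //|].
rewrite inE => /and4P [p1 p2 _ _].
case: j ji p1 => [|j'] ji p1; first by rewrite inE in p1.
case: i i1 isz ji p2 => [|i'] //= _ isz ji p2.
exists i', j'; split => //.
Qed.

Hypothesis Hdisj : forall i j x, i < size Bs -> j < size Bs ->
  x \in nth set0 Bs i -> x \in nth set0 Bs j -> i = j.
Hypothesis Hcov : forall x : T, exists2 i, i < size Bs & x \in nth set0 Bs i.

Definition lvl (x : T) := find (fun A : {set T} => x \in A) Bs.

Lemma lvl_has x : has (fun A : {set T} => x \in A) Bs.
Proof.
have [i isz xi] := Hcov x.
by apply/(has_nthP set0); exists i.
Qed.

Lemma lvl_lt x : lvl x < size Bs.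
Proof. by rewrite /lvl -has_find lvl_has. Qed.

Lemma lvl_eq x i : i < size Bs -> x \in nth set0 Bs i -> lvl x = i.
Proof.
move=> isz xi; apply: (Hdisj (x := x)) => //; first exact: lvl_lt.
exact: (nth_find set0 (lvl_has x)).
Qed.

Lemma dpath_size s : is_dpath (LevelSchedule conf Bs) s -> size s <= size Bs.
Proof.
case: s => [|x p] //= /andP [_ Hp].
have Hs : sorted ltn (map lvl (x :: p)).
  rewrite /= path_map; apply: sub_path Hp => u v /LS_inv [i [j [ji isz uj vi]]] /=.
  rewrite (lvl_eq _ uj) ?(lvl_eq isz vi) //; exact: ltn_trans ji isz.
have Hu : uniq (map lvl (x :: p)) by apply: sorted_uniq Hs; [exact: ltn_trans | exact: ltnn].
apply: (@leq_trans (size (map lvl (x :: p)))); first by rewrite size_map.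
rewrite -(size_iota 0 (size Bs)).
apply: (uniq_leq_size Hu) => y /mapP [z _ ->]; rewrite mem_iota /= add0n; exact: lvl_lt.
Qed.

Lemma Lt1_le : Lt1 (LevelSchedule conf Bs) <= size Bs.
Proof.
apply/bigmax_leqP => n /existsP [t Ht].
by rewrite -(size_tuple t); apply: dpath_size.
Qed.
End Gen.

Lemma part_ok (T : finType) (conf : rel T) k (P : 'I_k -> {set T}) (Q : 'S_k) :
  legal_partition conf P ->
  (Lt1 (LevelSchedule conf [seq P (Q i) | i <- enum 'I_k]) <= k)%N.
Proof.
move=> [_ [Hd Hc]].
set Bs := [seq _ | i <- _].
have szB : size Bs = k by rewrite size_map size_enum_ord.
have nthB : forall i (Hi : i < k), nth set0 Bs i = P (Q (Ordinal Hi)).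
  move=> i Hi; rewrite (nth_map (Ordinal Hi)) ?size_enum_ord //.
  by congr (P (Q _)); apply: val_inj; rewrite /= nth_enum_ord.
rewrite -[k in _ <= k]szB; apply: Lt1_le.
- move=> i j x; rewrite szB => Hi Hj; rewrite (nthB _ Hi) (nthB _ Hj) => xi xj.
  case: (eqVneq (Q (Ordinal Hi)) (Q (Ordinal Hj))) => [/perm_inj [] //| ne].
  by have := Hd _ _ ne => /disjointFr => /(_ x xi); rewrite xj.
- move=> x; have : x \in \bigcup_(i < k) P i by rewrite Hc inE.
  case/bigcupP => i _ xi.
  have Hi : (Q^-1 i)%g < k := ltn_ord _.
  exists (Q^-1 i)%g; first by rewrite szB.
  rewrite (nthB _ Hi).
  have -> : Ordinal Hi = (Q^-1 i)%g by apply: val_inj.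
  by rewrite permKV.
Qed.

Theorem claim1 (T : finType) (conf : rel T)
  (conf_sym : symmetric conf) (conf_irr : irreflexive conf)
  (k : nat) (P : 'I_k -> {set T}) (sigma : 'S_k) :
  legal_partition conf P ->
  (Lt1 (LevelSchedule conf [seq P i | i <- enum 'I_k]) <= k)%N /\
  (Lt1 (LevelSchedule conf [seq P (sigma i) | i <- enum 'I_k]) <= k)%N.
Proof.
move=> HP; split; last exact: part_ok.
have -> : [seq P i | i <- enum 'I_k] = [seq P ((1 : 'S_k)%g i) | i <- enum 'I_k].
  by apply: eq_map => i; rewrite perm1.
exact: part_ok.
Qed.
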